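(* There exists a family $(C_n)_{n\ge1}$, where $C_n$ is a circuit on $n$ qubits composed of controlled-not gates and one-qubit diagonal gates, with the following property: for every polynomial $p$ there is a polynomial $q$ such that for all $n$, every quantum circuit in which the operator computed by $C_n$ is embedded using at most $p(n)$ ancillae has depth at least $2^n/q(n)$. In other words, these circuits cannot be parallelized to less than exponential depth with a polynomial number of ancillae.
   Context: Qubits have computational basis $|0\rangle,|1\rangle$. The controlled-not gate is $|a,b\rangle\mapsto|a,a\oplus b\rangle$; a one-qubit diagonal gate is $\mathrm{diag}(e^{i\alpha},e^{i\beta})$ on a single qubit. A one-layer circuit is a tensor product of arbitrary one-qubit and two-qubit unitary gates acting on pairwise disjoint sets of qubits; a quantum circuit of depth $d$ is a product of $d$ one-layer circuits. An operator $F$ on $n$ qubits is embedded in an operator $M$ on $n+m$ qubits using $m$ ancillae if $M(|\psi\rangle\otimes|0\cdots0\rangle)=(F|\psi\rangle)\otimes|0\cdots0\rangle$ for all $|\psi\rangle$. *)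

(* Defs.v *)
From HB Require Import structures.
From mathcomp Require Import all_boot all_order all_algebra.
From mathcomp Require Import complex.
From mathcomp Require Import reals.
From Stdlib Require List.
Set Implicit Arguments. Unset Strict Implicit. Unset Printing Implicit Defensive.
Import Order.TTheory GRing.Theory Num.Theory.
Local Open Scope ring_scope.

Section Quantum.
Variable R : realType.
Notation C := (R[i]).

Definition basis (N : nat) := {ffun 'I_N -> bool}.
Definition op (N : nat) := basis N -> basis N -> C.
Definition vec (N : nat) := basis N -> C.

Definition opmul N (A B : op N) : op N :=
  fun x y => \sum_(z : basis N) A x z * B z y.
Definition opid N : op N := fun x y => (x == y)%:R.
Definition opapp N (A : op N) (v : vec N) : vec N :=
  fun x => \sum_(y : basis N) A x y * v y.

Definition unitary k (U : 'M[C]_k) : Prop :=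
  U *m (map_mx (fun z : C => z^*) U)^T = 1%:M.

Definition bidx (b : bool) : 'I_2 := if b then ord_max else ord0.
Definition bidx2 (a b : bool) : 'I_4 := inord (2 * a + b)%N.

Inductive gate (N : nat) :=
| Gate1 of 'I_N & 'M[C]_2
| Gate2 of 'I_N & 'I_N & 'M[C]_4.

Definition gate_support N (g : gate N) : seq 'I_N :=
  match g with Gate1 i _ => [:: i] | Gate2 i j _ => [:: i; j] end.

Definition gate_ok N (g : gate N) : Prop :=
  match g with
  | Gate1 _ U => unitary U
  | Gate2 i j U => i <> j /\ unitary U
  end.

Definition agree_off N (s : seq 'I_N) (x y : basis N) : C :=
  (\prod_(k : 'I_N | k \notin s) (x k == y k)%:R).

Definition gate_op N (g : gate N) : op N :=
  match g with
  | Gate1 i U => fun x y => agree_off [:: i] x y * U (bidx (x i)) (bidx (y i))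
  | Gate2 i j U => fun x y =>
      agree_off [:: i; j] x y * U (bidx2 (x i) (x j)) (bidx2 (y i) (y j))
  end.

(* a one-layer circuit: gates acting on pairwise disjoint sets of qubits
   (qubits not touched carry the identity) *)
Definition layer (N : nat) := seq (gate N).
Definition layer_ok N (l : layer N) : Prop :=
  (forall g, List.In g l -> gate_ok g) /\ uniq (flatten (map (@gate_support N) l)).
Definition layer_op N (l : layer N) : op N := foldr (@opmul N) (@opid N) (map (@gate_op N) l).

Definition has_depth_circuit N (d : nat) (M : op N) : Prop :=
  exists ls : seq (layer N),
    size ls = d /\ (forall l, List.In l ls -> layer_ok l) /\
    forall x y, M x y = foldr (@opmul N) (@opid N) (map (@layer_op N) ls) x y.

Inductive cd_gate (n : nat) :=
| CNOT of 'I_n & 'I_n          (* control, target *)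
| Diag of 'I_n & C & C.        (* diag(a, b) with |a| = |b| = 1 *)

Definition cd_gate_ok n (g : cd_gate n) : Prop :=
  match g with
  | CNOT c t => c <> t
  | Diag _ a b => `|a| = 1 /\ `|b| = 1
  end.

Definition flip_at n (t : 'I_n) (v : bool) (x : basis n) : basis n :=
  [ffun k => if k == t then x k (+) v else x k].

Definition cd_gate_op n (g : cd_gate n) : op n :=
  match g with
  | CNOT c t => fun x y => (x == flip_at t (y c) y)%:R
  | Diag i a b => fun x y => (x == y)%:R * (if y i then b else a)
  end.

(* a circuit applies its gates in order: operator = g_k ... g_1 *)
Definition cd_circuit_op n (gs : seq (cd_gate n)) : op n :=
  foldl (fun acc g => opmul (cd_gate_op g) acc) (@opid n) gs.

(* |psi> (x) |0...0> on n + m qubits *)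
Definition with_ancillae n m (psi : vec n) : vec (n + m) :=
  fun x => psi [ffun i : 'I_n => x (lshift m i)] *
           (\prod_(j : 'I_m) (~~ x (rshift n j))%:R).

Definition embeds n m (F : op n) (M : op (n + m)) : Prop :=
  forall psi : vec n,
    forall x, opapp M (@with_ancillae n m psi) x = @with_ancillae n m (opapp F psi) x.

End Quantum.

(* Main.v *)
Require Import Defs.
From HB Require Import structures.
From mathcomp Require Import all_boot all_order all_algebra.
From mathcomp Require Import complex reals.
From Stdlib Require List.
From Stdlib Require Import ClassicalEpsilon Classical.
From mathcomp Require Import zify lra.
From mathcomp Require classical_sets.
Set Implicit Arguments. Unset Strict Implicit. Unset Printing Implicit Defensive.
Import Order.TTheory GRing.Theory Num.Theory.
Local Open Scope ring_scope.


Section Poly.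
Variable R : realType.
Notation C := (R[i]).

Definition inV (P : pred C) (E : nat) (x : C) :=
  exists s : seq (rat * seq C),
    all (fun p => all P p.2 && (size p.2 <= E)%N) s /\
    x = \sum_(p <- s) ratr p.1 * \prod_(a <- p.2) a.

Variable P : pred C.

Lemma inV_le E E' x : (E <= E')%N -> inV P E x -> inV P E' x.
Proof.
move=> le [s [Hs ->]]; exists s; split=> //.
apply/allP=> p /(allP Hs) /andP[-> /leq_trans]; exact.
Qed.

Lemma inV_rat q : inV P 0 (ratr q).
Proof. by exists [:: (q, [::])]; split; rewrite //= big_seq1 big_nil mulr1. Qed.

Lemma inV_nat k : inV P 0 k%:R.
Proof. by rewrite -ratr_nat; apply: inV_rat. Qed.

Lemma inV_var a : P a -> inV P 1 a.
Proof.
move=> Pa; exists [:: (1, [:: a])]; split; first by rewrite /= Pa.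
by rewrite big_seq1 big_seq1 rmorph1 mul1r.
Qed.

Lemma inV_add E x y : inV P E x -> inV P E y -> inV P E (x + y).
Proof.
move=> [s [Hs ->]] [t [Ht ->]]; exists (s ++ t); split.
  by rewrite all_cat Hs Ht.
by rewrite big_cat.
Qed.

Lemma inV_mul E1 E2 x y : inV P E1 x -> inV P E2 y -> inV P (E1 + E2) (x * y).
Proof.
move=> [s [Hs ->]] [t [Ht ->]].
exists [seq (p.1 * q.1, p.2 ++ q.2) | p <- s, q <- t]; split.
  apply/allP=> r /allpairsP [[p q] [/= /(allP Hs) /andP[Pp Sp] /(allP Ht) /andP[Pq Sq] ->]].
  by rewrite /= all_cat Pp Pq size_cat leq_add.
rewrite big_allpairs_dep /= big_distrl /=; apply: eq_bigr => p _.
rewrite big_distrr /=; apply: eq_bigr => q _.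
rewrite rmorphM big_cat /=; rewrite mulrACA //.
Qed.

Lemma inV_sum_seq (I : Type) (r : seq I) E (F : I -> C) :
  (forall i, inV P E (F i)) -> inV P E (\sum_(i <- r) F i).
Proof.
move=> H; elim: r => [|i r IH]; first by rewrite big_nil -(rmorph0 ratr); apply: (@inV_le 0 E) => //; apply: inV_rat.
by rewrite big_cons; apply: inV_add.
Qed.

Lemma inV_sum (I : finType) E (F : I -> C) :
  (forall i, inV P E (F i)) -> inV P E (\sum_i F i).
Proof. by move=> H; apply: inV_sum_seq. Qed.

Lemma inV_prod_seq (I : Type) (r : seq I) (Es : I -> nat) (F : I -> C) :
  (forall i, inV P (Es i) (F i)) -> inV P (\sum_(i <- r) Es i)%N (\prod_(i <- r) F i).
Proof.
move=> H; elim: r => [|i r IH]; first by rewrite !big_nil -(rmorph1 ratr); apply: inV_rat.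
by rewrite !big_cons; apply: inV_mul.
Qed.

Lemma inV_prod (I : finType) (Es : I -> nat) (F : I -> C) :
  (forall i, inV P (Es i) (F i)) -> inV P (\sum_i Es i)%N (\prod_i F i).
Proof. by move=> H; apply: inV_prod_seq. Qed.

Lemma inV_exp E k x : inV P E x -> inV P (k * E) (x ^+ k).
Proof.
move=> H; elim: k => [|k IH]; first by rewrite expr0 -(rmorph1 ratr); apply: inV_rat.
by rewrite exprS mulSn; apply: inV_mul.
Qed.

Lemma inV_conj E x : (forall a, P a -> P a^*) -> inV P E x -> inV P E x^*.
Proof.
move=> HP [s [Hs ->]]; exists [seq (p.1, map (fun a => a^*) p.2) | p <- s]; split.
  rewrite all_map; apply/allP=> p /(allP Hs) /andP[Pp Sp] /=.
  rewrite all_map size_map Sp andbT; apply/allP=> a /(allP Pp) /=; exact: HP.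
rewrite rmorph_sum big_map; apply: eq_bigr => p _ /=.
by rewrite rmorphM fmorph_rat rmorph_prod big_map.
Qed.

End Poly.


Section Dim.
Variable R : realType.
Notation C := (R[i]).

Lemma prod_count (vs ms : seq C) : uniq vs -> all (mem vs) ms ->
  \prod_(a <- ms) a = \prod_(i < size vs) (nth 0 vs i) ^+ count_mem (nth 0 vs i) ms.
Proof.
move=> Uvs Hms.
rewrite -(prodr_undup_exp_count ms predT id) /=.
rewrite -(big_mkord predT (fun i => nth 0 vs i ^+ count_mem (nth 0 vs i) ms)).
rewrite -(big_nth 0 predT (fun a => a ^+ count_mem a ms)).
rewrite [RHS](bigID (mem ms)) /= [X in _ * X]big1 ?mulr1; last first.
  by move=> a /count_memPn ->; rewrite expr0.
rewrite -[RHS]big_filter; apply: perm_big; apply: uniq_perm.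
- exact: undup_uniq.
- exact: filter_uniq.
move=> a; rewrite mem_undup mem_filter /=.
by case Ha: (a \in ms) => //=; move: (allP Hms a Ha).
Qed.

Lemma inV_dep (vs : seq C) (E : nat) (A : finType) (X : A -> C) :
  uniq vs -> (forall al, inV (mem vs) E (X al)) -> ((E.+1) ^ size vs < #|A|)%N ->
  exists c : A -> rat, (exists al, c al != 0) /\ \sum_al ratr (c al) * X al = 0.
Proof.
move=> Uvs HX Hcard.
pose N := size vs.
pose B := {ffun 'I_N -> 'I_E.+1}.
pose mono (b : B) : C := \prod_(i < N) (nth 0 vs i) ^+ b i.
pose key (ms : seq C) : B := [ffun i : 'I_N => inord (count_mem (nth 0 vs i) ms)].
pose s al := proj1_sig (constructive_indefinite_description _ (HX al)).
have Hs al : all (fun p => all (mem vs) p.2 && (size p.2 <= E)%N) (s al) /\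
    X al = \sum_(p <- s al) ratr p.1 * \prod_(a <- p.2) a.
  exact: (proj2_sig (constructive_indefinite_description _ (HX al))).
pose co al (b : B) : rat := \sum_(p <- s al | key p.2 == b) p.1.
have Hmono ms : all (mem vs) ms -> (size ms <= E)%N -> \prod_(a <- ms) a = mono (key ms).
  move=> Hms Hsz; rewrite (@prod_count vs) //; apply: eq_bigr => i _.
  rewrite ffunE inordK // ltnS; apply: leq_trans Hsz; exact: count_size.
have HXco al : X al = \sum_(b : B) ratr (co al b) * mono b.
  have [Hal ->] := Hs al.
  transitivity (\sum_(p <- s al) \sum_(b : B | key p.2 == b) ratr p.1 * mono b).
    rewrite big_seq_cond [RHS]big_seq_cond; apply: eq_bigr => p /andP[ps _].
    have /andP[Pp Sp] := allP Hal p ps.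
    rewrite (big_pred1 (key p.2)); last by move=> b; rewrite eq_sym.
    by rewrite Hmono.
  rewrite (exchange_big_dep xpredT) //=; apply: eq_bigr => b _.
  by rewrite /co rmorph_sum big_distrl.
pose Mx : 'M[rat]_(#|A|, #|B|) := \matrix_(i, j) co (enum_val i) (enum_val j).
have cardB : #|B| = (E.+1 ^ N)%N by rewrite card_ffun !card_ord.
have nfree : ~~ row_free Mx.
  rewrite -row_leq_rank -ltnNge; apply: leq_ltn_trans (rank_leq_col _) _.
  by rewrite cardB.
have [v [vM vnz]] : exists v : 'rV[rat]_#|A|, v *m Mx = 0 /\ v != 0.
  apply: NNPP => H; move/negP: nfree; apply; apply: inj_row_free => v vM.
  apply/eqP; apply: NNPP => vnz; apply: H; exists v; split=> //; exact/negP.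
exists (fun al => v 0 (enum_rank al)); split.
  apply: NNPP => H; move/negP: vnz; apply; apply/eqP/rowP => j.
  rewrite mxE; apply/eqP; apply: NNPP => Hj; apply: H.
  by exists (enum_val j); rewrite enum_valK; apply/negP.
under eq_bigr do rewrite HXco big_distrr /=.
rewrite exchange_big /=; apply: big1 => b _.
under eq_bigr do rewrite mulrA.
rewrite -big_distrl /=.
have -> : \sum_al ratr (v 0 (enum_rank al)) * ratr (co al b) =
          ratr ((v *m Mx) 0 (enum_rank b)) :> C.
  rewrite mxE rmorph_sum /=.
  rewrite (reindex enum_rank) /=; last by apply: onW_bij; exact: enum_rank_bij.
  apply: eq_bigr => al _; rewrite mxE !enum_rankK rmorphM //.
by rewrite vM mxE rmorph0 mul0r.
Qed.

End Dim.

Module Unc.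
Import classical_sets.

Section Unc.
Variable R : realType.

Lemma avoid1 (a b x : R) : a < b -> exists a' b',
  [/\ a <= a', a' < b', b' <= b & (x < a') || (b' < x)].
Proof.
move=> ab; set t := (b - a) / 3%:R.
have ht : t * 3%:R = b - a by rewrite /t mulfVK // pnatr_eq0.
have [xle|xgt] := lerP x (a + t).
  exists (a + t + t), b; split; [lra|lra|lra|].
  by apply/orP; left; lra.
exists a, (a + t); split; [lra|lra|lra|].
by apply/orP; right; lra.
Qed.

Lemma avoid_list (s : seq R) (a b : R) : a < b -> exists a' b',
  [/\ a <= a', a' < b', b' <= b & forall x, x \in s -> (x < a') || (b' < x)].
Proof.
elim: s a b => [|y s IH] a b ab; first by exists a, b; split.
have [a1 [b1 [h1 h2 h3 h4]]] := @avoid1 a b y ab.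
have [a2 [b2 [g1 g2 g3 g4]]] := IH a1 b1 h2.
exists a2, b2; split; first exact: le_trans g1.
- by [].
- exact: le_trans h3.
move=> x; rewrite inE => /orP[/eqP ->|/g4 //].
case/orP: h4 => h; apply/orP; [left; exact: lt_le_trans g1|right; exact: le_lt_trans g3 _].
Qed.

Lemma uncountable (ts : nat -> seq R) : exists r : R, [/\ 0 <= r, r <= 1 & forall k, r \notin ts k].
Proof.
have step : forall (k : nat) (ab : R * R), {ab' : R * R | ab.1 < ab.2 ->
   [/\ ab.1 <= ab'.1, ab'.1 < ab'.2, ab'.2 <= ab.2 &
       forall x, x \in ts k -> (x < ab'.1) || (ab'.2 < x)]}.
  move=> k ab; apply: constructive_indefinite_description.
  case: (boolP (ab.1 < ab.2)) => h.
    have [a' [b' H]] := @avoid_list (ts k) _ _ h; by exists (a', b').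
  by exists ab => h'; case/negP: h.
pose f := fix f k := if k is k'.+1 then proj1_sig (step k' (f k')) else ((0 : R), (1 : R)).
have lt k : (f k).1 < (f k).2.
  elim: k => [|k IH] /=; first exact: ltr01.
  by case: (proj2_sig (step k (f k)) IH).
have mono k : (f k).1 <= (f k.+1).1 /\ (f k.+1).2 <= (f k).2.
  by rewrite /=; case: (proj2_sig (step k (f k)) (lt k)).
have amono j k : (j <= k)%N -> (f j).1 <= (f k).1.
  elim: k => [|k IH]; first by rewrite leqn0 => /eqP ->.
  rewrite leq_eqVlt => /orP[/eqP ->//|]; rewrite ltnS => /IH h.
  exact: le_trans h (proj1 (mono k)).
have bmono j k : (j <= k)%N -> (f k).2 <= (f j).2.
  elim: k => [|k IH]; first by rewrite leqn0 => /eqP ->.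
  rewrite leq_eqVlt => /orP[/eqP ->//|]; rewrite ltnS => /IH h.
  exact: le_trans (proj2 (mono k)) h.
have ab j k : (f j).1 <= (f k).2.
  have [jk|kj] := leqP j k.
    exact: le_trans (amono _ _ jk) (ltW (lt k)).
  exact: le_trans (ltW (lt j)) (bmono _ _ (ltnW kj)).
pose E := range (fun k => (f k).1).
have Ene : (E !=set0)%classic by exists (f 0%N).1; exists 0%N.
have Eub k : ubound E (f k).2 by move=> x [j _ <-]; exact: ab.
have Ehs : has_sup E by split=> //; exists (f 0%N).2; exact: Eub.
exists (sup E); split.
- by apply: (@le_trans _ _ (f 0%N).1) => //; apply: sup_upper_bound => //; exists 0%N.
- by apply: ge_sup => //; exact: (Eub 0%N).
move=> k; apply/negP => rin.
have [_ _ _ H] := proj2_sig (step k (f k)) (lt k).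
have := H _ rin; rewrite -/(f k.+1).
have h1 : (f k.+1).1 <= sup E by apply: sup_upper_bound => //; exists k.+1.
have h2 : sup E <= (f k.+1).2 by apply: ge_sup => //; exact: Eub.
by rewrite ltNge h1 /= ltNge h2.
Qed.

End Unc.

End Unc.
Import Unc.


Section Indep.
Variable R : realType.
Notation C := (R[i]).

Definition indep K (w : 'I_K -> C) := forall D (c : {ffun 'I_K -> 'I_D.+1} -> rat),
  \sum_al ratr (c al) * \prod_i w i ^+ al i = 0 -> forall al, c al = 0.

Definition Tc K D := {ffun ('I_D.+1 * {ffun 'I_K -> 'I_D.+1}) -> rat}.

Definition Qpoly K (w : 'I_K -> C) D (cc : Tc K D) : {poly C} :=
  \sum_(t < D.+1) (\sum_(g : {ffun 'I_K -> 'I_D.+1}) ratr (cc (t, g)) * \prod_i w i ^+ g i) *: 'X^t.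

Definition roots (Q : {poly C}) : seq C :=
  if Q == 0 then [::] else sval (closed_field_poly_normal Q).

Lemma rootsP Q y : Q != 0 -> Q.[y] = 0 -> y \in roots Q.
Proof.
move=> Q0 Qy; rewrite /roots (negbTE Q0).
case: (closed_field_poly_normal Q) => rs /= Hrs.
move: Qy; rewrite Hrs hornerZ horner_prod => /eqP; rewrite mulf_eq0 lead_coef_eq0 (negbTE Q0) /=.
rewrite prodf_seq_eq0 => /hasP [z zin]; rewrite hornerXsubC subr_eq0 => /eqP ->. done.
Qed.

Definition pts K (w : 'I_K -> C) (k : nat) : seq C :=
  match (unpickle k : option {D : nat & Tc K D}) with
  | Some (existT D cc) => roots (Qpoly w cc)
  | None => [::]
  end.

Definition ext K (w : 'I_K -> C) (y : C) : 'I_K.+1 -> C :=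
  fun i => if unlift ord0 i is Some j then w j else y.

Lemma indep0 : indep (fun i : 'I_0 => 1).
Proof.
move=> D c H al.
have all_eq (al' : {ffun 'I_0 -> 'I_D.+1}) : al' = al by apply/ffunP => -[].
move: H; rewrite (bigD1 al) //= [X in _ + X]big1 ?addr0; last by move=> al' /eqP; rewrite (all_eq al').
rewrite big_ord0 mulr1 => /eqP; rewrite fmorph_eq0 => /eqP //.
Qed.

Lemma indep_step K (w : 'I_K -> C) : indep w -> exists y : C, `|y| = 1 /\ indep (ext w y).
Proof.
move=> Hw.
have [r [r0 r1 rnot]] := @uncountable R (fun k => map (@complex.Re R) (pts w k)).
have r2 : 0 <= 1 - r ^+ 2 by rewrite subr_ge0 expr_le1.
exists (Complex r (Num.sqrt (1 - r ^+ 2))); split.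
  rewrite normc_def /= sqr_sqrtr // addrC subrK sqrtr1 //.
set y := Complex _ _.
move=> D c Hsum.
pose h (p : 'I_D.+1 * {ffun 'I_K -> 'I_D.+1}) : {ffun 'I_K.+1 -> 'I_D.+1} :=
  [ffun i => if unlift ord0 i is Some j then p.2 j else p.1].
pose hinv (al : {ffun 'I_K.+1 -> 'I_D.+1}) := (al ord0, [ffun j => al (lift ord0 j)]).
have hK : cancel hinv h.
  move=> al; apply/ffunP => i; rewrite ffunE /=.
  by case: unliftP => [j ->|->]; rewrite ?ffunE.
have hK' : cancel h hinv.
  move=> [t g]; rewrite /hinv /= ffunE unlift_none; congr pair.
  by apply/ffunP => j; rewrite !ffunE liftK.
pose cc : Tc K D := [ffun p => c (h p)].
pose a (t : 'I_D.+1) := \sum_(g : {ffun 'I_K -> 'I_D.+1}) ratr (cc (t, g)) * \prod_i w i ^+ g i.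
have HQ : (Qpoly w cc).[y] = 0.
  rewrite -Hsum (reindex h) /=; last by exists hinv => p _; [exact: hK'|exact: hK].
  rewrite /Qpoly horner_sum.
  have -> : \sum_j ratr (c (h j)) * \prod_(i < K.+1) ext w y i ^+ h j i =
     \sum_t \sum_g ratr (c (h (t,g))) * \prod_(i < K.+1) ext w y i ^+ h (t,g) i.
    by rewrite pair_big; apply: eq_bigr => -[t g].
  apply: eq_bigr => t _.
  rewrite hornerZ hornerXn big_distrl /=; apply: eq_bigr => g _.
  rewrite big_ord_recl /ext /= !ffunE unlift_none.
  rewrite -mulrA; congr (_ * _); rewrite mulrC; congr (_ * _); apply: eq_bigr => j _.
  by rewrite liftK ffunE liftK.
have [Q0|Qn0] := eqVneq (Qpoly w cc) 0.
  have at0 t : a t = 0.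
    have := congr1 (fun Q : {poly C} => Q`_t) Q0.
    rewrite coef0 /Qpoly coef_sum (bigD1 t) //= [X in _ + X]big1 ?addr0.
      by rewrite coefZ coefXn eqxx mulr1.
    move=> t' tt'; rewrite coefZ coefXn (_ : (t == t' :> nat) = false) ?mulr0 //.
    by apply/negbTE; rewrite eq_sym; exact: tt'.
  move=> al; rewrite -(hK al).
  have := Hw D (fun g => cc (al ord0, g)) (at0 _) [ffun j => al (lift ord0 j)].
  by rewrite ffunE.
have := rootsP Qn0 HQ.
move=> yin; have := rnot (pickle (existT (fun D => Tc K D) D cc)).
by rewrite /pts pickleK (map_f (@complex.Re R) yin).
Qed.

Lemma indep_exists K : exists w : 'I_K -> C, (forall i, `|w i| = 1) /\ indep w.
Proof.
elim: K => [|K [w [w1 Hw]]]; first by exists (fun _ => 1); split; [move=> _; exact: normr1|exact: indep0].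
have [y [y1 Hy]] := indep_step Hw.
exists (ext w y); split=> // i; rewrite /ext; by case: unlift.
Qed.

End Indep.


Section Circ.
Variable R : realType.
Notation C := (R[i]).

Definition gact n (g : cd_gate R n) (u : basis n) : basis n :=
  match g with CNOT c t => flip_at t (u c) u | Diag _ _ _ => u end.
Definition gph n (g : cd_gate R n) (u : basis n) : C :=
  match g with CNOT _ _ => 1 | Diag i a b => if u i then b else a end.
Definition run n (gs : seq (cd_gate R n)) u := foldl (fun u g => gact g u) u gs.
Fixpoint phase n (gs : seq (cd_gate R n)) u : C :=
  if gs is g :: gs' then gph g u * phase gs' (gact g u) else 1.

Lemma gate_pp n (g : cd_gate R n) x u : cd_gate_op g x u = (x == gact g u)%:R * gph g u.
Proof. by case: g => [c t|i a b] /=; rewrite ?mulr1. Qed.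

Lemma foldl_pp n (gs : seq (cd_gate R n)) : forall (pi : basis n -> basis n) (ph : basis n -> C) (acc : op R n),
  (forall x y, acc x y = (x == pi y)%:R * ph y) ->
  forall x y, foldl (fun acc g => opmul (cd_gate_op g) acc) acc gs x y =
     (x == run gs (pi y))%:R * (ph y * phase gs (pi y)).
Proof.
elim: gs => [|g gs IH] pi ph acc Hacc x y /=; first by rewrite Hacc mulr1.
rewrite (IH (fun y => gact g (pi y)) (fun y => ph y * gph g (pi y))) ?mulrA //.
move=> x' y'; rewrite /opmul (bigD1 (pi y')) //= big1 ?addr0.
  by rewrite Hacc eqxx mul1r gate_pp -mulrA [gph _ _ * _]mulrC.
by move=> u /negbTE uy; rewrite Hacc uy mul0r mulr0.
Qed.

Lemma circ_pp n (gs : seq (cd_gate R n)) x y :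
  cd_circuit_op gs x y = (x == run gs y)%:R * phase gs y.
Proof.
rewrite /cd_circuit_op (@foldl_pp n gs id (fun _ => 1)) ?mul1r //.
by move=> x' y'; rewrite /opid mulr1.
Qed.

Lemma run_cat n (gs1 gs2 : seq (cd_gate R n)) u : run (gs1 ++ gs2) u = run gs2 (run gs1 u).
Proof. by rewrite /run foldl_cat. Qed.

Lemma run_cons n (g : cd_gate R n) gs u : run (g :: gs) u = run gs (gact g u).
Proof. by []. Qed.

Lemma phase_cat n (gs1 gs2 : seq (cd_gate R n)) u :
  phase (gs1 ++ gs2) u = phase gs1 u * phase gs2 (run gs1 u).
Proof.
elim: gs1 u => [|g gs IH] u /=; first by rewrite mul1r.
by rewrite IH mulrA.
Qed.

Variable n' : nat.
Notation n := n'.+1.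
Notation SS := {ffun 'I_n' -> bool}.

Definition par (S : SS) (y : basis n) : bool := \big[addb/false]_(i | S i) y (lift ord0 i).
Definition chi (S : SS) (y : basis n) : bool := y ord0 (+) par S y.
Definition ladder (S : SS) : seq (cd_gate R n) :=
  map (fun i => CNOT R (lift ord0 i) ord0) (filter S (enum 'I_n')).
Definition block (S : SS) (z : C) : seq (cd_gate R n) := ladder S ++ Diag ord0 1 z :: ladder S.
Definition circ (z : SS -> C) : seq (cd_gate R n) :=
  flatten (map (fun S => block S (z S)) (enum SS)).

Lemma flip_lift0 b (y : basis n) j : flip_at ord0 b y (lift ord0 j) = y (lift ord0 j).
Proof. by rewrite ffunE eq_sym (negbTE (neq_lift _ _)). Qed.

Lemma flip_flip b1 b2 (y : basis n) : flip_at ord0 b2 (flip_at ord0 b1 y) = flip_at ord0 (b1 (+) b2) y.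
Proof. by apply/ffunP => k; rewrite !ffunE; case: (k == ord0); rewrite ?ffunE ?addbA. Qed.

Lemma flip_false (y : basis n) : flip_at ord0 false y = y.
Proof. by apply/ffunP => k; rewrite !ffunE addbF; case: (k == ord0). Qed.

Lemma run_ladder_seq (l : seq 'I_n') y :
  run (map (fun i => CNOT R (lift ord0 i) ord0) l) y =
  flip_at ord0 (\big[addb/false]_(i <- l) y (lift ord0 i)) y.
Proof.
elim: l y => [|i l IH] y; first by rewrite big_nil flip_false.
rewrite map_cons run_cons IH /= flip_flip big_cons; congr (flip_at _ (_ (+) _) _).
by apply: eq_bigr => j _; rewrite flip_lift0.
Qed.

Lemma phase_ladder_seq (l : seq 'I_n') y :
  phase (map (fun i => CNOT R (lift ord0 i) ord0) l) y = 1.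
Proof. by elim: l y => [|i l IH] y //=; rewrite IH mul1r. Qed.

Lemma run_ladder S y : run (ladder S) y = flip_at ord0 (par S y) y.
Proof. by rewrite /ladder run_ladder_seq big_filter big_enum_cond. Qed.

Lemma par_flip0 S b (y : basis n) : par S (flip_at ord0 b y) = par S y.
Proof. by apply: eq_bigr => j _; rewrite flip_lift0. Qed.

Lemma run_block S z y : run (block S z) y = y.
Proof.
rewrite /block run_cat /run /= -!/(run _ _) !run_ladder par_flip0 flip_flip addbb.
exact: flip_false.
Qed.

Lemma phase_block S z y : phase (block S z) y = if chi S y then z else 1.
Proof.
rewrite /block phase_cat /= /ladder !phase_ladder_seq mul1r mulr1.
by rewrite -/(ladder S) run_ladder /chi ffunE eqxx.
Qed.

Lemma run_flat (ss : seq SS) (z : SS -> C) y :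
  run (flatten (map (fun S => block S (z S)) ss)) y = y.
Proof. by elim: ss => [|S ss IH] //=; rewrite run_cat run_block IH. Qed.

Lemma phase_flat (ss : seq SS) (z : SS -> C) y :
  phase (flatten (map (fun S => block S (z S)) ss)) y =
  \prod_(S <- ss) (if chi S y then z S else 1).
Proof.
elim: ss => [|S ss IH] /=; first by rewrite big_nil.
by rewrite phase_cat run_block phase_block IH big_cons.
Qed.

Lemma circ_semantics (z : SS -> C) x y :
  cd_circuit_op (circ z) x y = (x == y)%:R * \prod_(S <- enum SS) (if chi S y then z S else 1).
Proof. by rewrite circ_pp /circ run_flat phase_flat. Qed.

Lemma sum_toggle (P : pred 'I_n') (f : 'I_n' -> bool) j :
  \big[addb/false]_(i | P i) (f i (+) (i == j)) = (\big[addb/false]_(i | P i) f i) (+) P j.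
Proof.
rewrite big_split /=; congr (_ (+) _).
case Pj: (P j).
  rewrite (bigD1 j) //= eqxx big1 ?addbF // => i /andP[_ /negbTE] //.
by apply: big1 => i Pi; apply/negbTE; apply: contraFN Pj => /eqP <-.
Qed.

Definition sigma (b : bool) (j : 'I_n') (y : basis n) : basis n :=
  [ffun k => if k == lift ord0 j then ~~ y k else if k == ord0 then y k (+) b else y k].

Lemma sigma_lift b j y i : sigma b j y (lift ord0 i) = y (lift ord0 i) (+) (i == j).
Proof.
rewrite ffunE (inj_eq (@lift_inj _ ord0)).
case: (i =P j) => [->|ij]; first by rewrite addbT.
by rewrite [lift ord0 i == ord0]eq_sym (negbTE (neq_lift _ _)) addbF.
Qed.

Lemma sigma_0 b j y : sigma b j y ord0 = y ord0 (+) b.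
Proof. by rewrite ffunE (negbTE (neq_lift _ _)) eqxx. Qed.

Lemma sigmaK b j : involutive (sigma b j).
Proof.
move=> y; apply/ffunP => k; rewrite !ffunE.
case: (k == lift ord0 j); first by rewrite negbK.
by case: (k == ord0); rewrite ?addbK.
Qed.

Lemma par_sigma b j y S : par S (sigma b j y) = par S y (+) S j.
Proof.
by rewrite /par -sum_toggle; apply: eq_bigr => i _; rewrite sigma_lift.
Qed.

Lemma chi_sigma b j y S : chi S (sigma b j y) = chi S y (+) (b (+) S j).
Proof.
rewrite /chi sigma_0 par_sigma.
by case: (y ord0); case: b; case: (par S y); case: (S j).
Qed.

Variable z : SS -> C.
Hypothesis Hz : forall S, `|z S| = 1.

Definition fS (S : SS) (y : basis n) : C := if chi S y then z S else 1.
Definition hS (T S : SS) (y : basis n) : C := if chi T y then (fS S y)^-1 else fS S y.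

Lemma fS_neq0 S y : fS S y != 0.
Proof.
rewrite /fS; case: (chi S y); last exact: oner_neq0.
by rewrite -normr_eq0 Hz oner_neq0.
Qed.

Lemma prod_pair T S : S != T -> \prod_y hS T S y = 1.
Proof.
move=> ST.
have [j Sj] : exists j, S j != T j.
  apply: NNPP => H; move/negP: ST; apply; apply/eqP/ffunP => j.
  apply/eqP; apply: NNPP => Hj; apply: H; exists j; exact/negP.
have chiS y : chi S (sigma (S j) j y) = chi S y by rewrite chi_sigma addbb addbF.
have chiT y : chi T (sigma (S j) j y) = ~~ chi T y.
  by rewrite chi_sigma; move: Sj; case: (S j); case: (T j); case: (chi T y).
rewrite (bigID (fun y => chi T y)) /=.
rewrite [X in _ * X](reindex_inj (can_inj (sigmaK (S j) j))) /=.
rewrite [X in _ * X](eq_bigl (fun y => chi T y)); last by move=> y; rewrite chiT negbK.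
rewrite -big_split /=; apply: big1 => y cT.
rewrite /hS chiT cT /= /fS chiS mulVf //; exact: fS_neq0.
Qed.
Lemma card_chi T : #|[pred y : basis n | chi T y]| = (2 ^ n')%N.
Proof.
have flip0 y : chi T (flip_at ord0 true y) = ~~ chi T y.
  by rewrite /chi par_flip0 ffunE eqxx addbT addNb.
have inj : injective (@flip_at n ord0 true).
  by apply: (@can_inj _ _ _ (@flip_at n ord0 true)) => y; rewrite flip_flip flip_false.
have e : #|[pred y : basis n | chi T y]| = #|[pred y : basis n | ~~ chi T y]|.
  rewrite -!sum1_card (reindex_inj inj) /=; apply: eq_bigl => y.
  by rewrite !inE flip0.
have tot := cardC [pred y : basis n | chi T y].
rewrite card_ffun card_bool card_ord in tot.
have eC : #|[predC [pred y : basis n | chi T y]]| = #|[pred y : basis n | ~~ chi T y]|.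
  by apply: eq_card => y; rewrite !inE.
rewrite eC -e in tot.
by apply: double_inj; rewrite -addnn tot expnS mul2n.
Qed.

Lemma prod_diag T : \prod_y hS T T y = (z T ^+ (2 ^ n'))^-1.
Proof.
transitivity (\prod_(y in [pred y : basis n | chi T y]) (z T)^-1).
  rewrite [RHS]big_mkcond; apply: eq_bigr => y _; rewrite /hS /fS inE.
  by case: (chi T y); rewrite ?invr1.
by rewrite prodr_const card_chi exprVn.
Qed.

Lemma fourier T :
  \prod_y (if chi T y then (\prod_S fS S y)^* else \prod_S fS S y) = (z T ^+ (2 ^ n'))^-1.
Proof.
have n1 y : `|\prod_S fS S y| = 1.
  rewrite normr_prod; apply: big1 => S _; rewrite /fS; case: (chi S y) => //; exact: normr1.
have conjV y : (\prod_S fS S y)^* = (\prod_S fS S y)^-1.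
  by rewrite invC_norm n1 expr1n invr1 mul1r.
transitivity (\prod_y \prod_S hS T S y).
  apply: eq_bigr => y _; rewrite conjV /hS; case: (chi T y) => //.
  by rewrite prodfV.
rewrite exchange_big (bigD1 T) //= prod_diag big1 ?mulr1 //.
by move=> S ST; apply: prod_pair.
Qed.
End Circ.

Lemma In_cat (T : Type) (x : T) (s1 s2 : seq T) :
  List.In x (s1 ++ s2) -> List.In x s1 \/ List.In x s2.
Proof.
elim: s1 => [|a s1 IH] /=; first by right.
by case=> [->|/IH [h|h]]; [left; left|left; right|right].
Qed.

Lemma In_map (T U : Type) (f : T -> U) (s : seq T) y :
  List.In y (map f s) -> exists x, y = f x.
Proof.
elim: s => [|a s IH] //=; case=> [<-|/IH //]; by exists a.
Qed.

Lemma In_flatten (T : Type) (x : T) (ss : seq (seq T)) :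
  List.In x (flatten ss) -> exists s, List.In s ss /\ List.In x s.
Proof.
elim: ss => [|s ss IH] //= h.
have [h'|h'] := In_cat h; first by exists s; split=> //; left.
have [s' [h1 h2]] := IH h'.
by exists s'; split=> //; right.
Qed.

Lemma circ_ok (R : realType) n' (z : {ffun 'I_n' -> bool} -> R[i]) :
  (forall S, `|z S| = 1) -> forall g, List.In g (circ z) -> cd_gate_ok g.
Proof.
move=> Hz g hin; have [s [hs hg]] := In_flatten hin; have [S eS] := In_map hs; subst s.
have lad : forall g, List.In g (ladder R S) -> cd_gate_ok g.
  move=> g' hg'; have [i ->] := In_map hg'; move=> /= e.
  by have := neq_lift ord0 i; rewrite e eqxx.
have [/lad //|[<-|/lad //]] := In_cat hg.
by rewrite /= normr1 Hz.
Qed.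



Section Mat.
Variable R : realType.
Notation C := (R[i]).
Variable N : nat.

Definition gate_vars (g : gate R N) : seq C :=
  match g with
  | Gate1 _ U => [seq U a b | a <- enum 'I_2, b <- enum 'I_2]
  | Gate2 _ _ U => [seq U a b | a <- enum 'I_4, b <- enum 'I_4]
  end.

Definition lvars (l : layer R N) : seq C := flatten (map gate_vars l).
Definition ents (ls : seq (layer R N)) : seq C := flatten (map lvars ls).

Variable P : pred C.

Lemma inV_prod0 (I : finType) (F : I -> C) : (forall i, inV P 0 (F i)) -> inV P 0 (\prod_i F i).
Proof. by move=> H; have := inV_prod (Es := fun _ => 0%N) H; rewrite big1_eq. Qed.

Lemma agree_inV s (x y : basis N) : inV P 0 (agree_off R s x y).
Proof.
rewrite /agree_off big_mkcond /=; apply: inV_prod0 => k.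
case: (k \notin s); first exact: inV_nat.
exact: (inV_nat P 1).
Qed.

Lemma gate_inV g : (forall a, a \in gate_vars g -> P a) -> forall x y, inV P 1 (gate_op g x y).
Proof.
move=> H x y; rewrite -[1%N]/(0 + 1)%N.
case: g H => [i U|i j U] H /=; apply: inV_mul; try exact: agree_inV; apply: inV_var; apply: H;
  by apply/allpairsP; eexists (_, _); split; [rewrite mem_enum|rewrite mem_enum|].
Qed.

Lemma layer_inV l : (forall a, a \in lvars l -> P a) ->
  forall x y, inV P (size l) (layer_op l x y).
Proof.
elim: l => [|g l IH] H x y.
  by rewrite /layer_op /= /opid; apply: inV_nat.
rewrite /layer_op /= /opmul -[(size l).+1]/(1 + size l)%N.
apply: inV_sum => u; apply: inV_mul.
  by apply: gate_inV => a ag; apply: H; rewrite /lvars /= mem_cat ag.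
by apply: IH => a al; apply: H; rewrite /lvars /= mem_cat al orbT.
Qed.

Lemma circuit_inV ls : (forall a, a \in ents ls -> P a) ->
  forall x y, inV P (\sum_(l <- ls) size l)%N (foldr (@opmul R N) (@opid R N) (map (@layer_op R N) ls) x y).
Proof.
elim: ls => [|l ls IH] H x y.
  by rewrite /= /opid big_nil; apply: inV_nat.
rewrite /= /opmul big_cons; apply: inV_sum => u; apply: inV_mul.
  by apply: layer_inV => a al; apply: H; rewrite /ents /= mem_cat al.
by apply: IH => a al; apply: H; rewrite /ents /= mem_cat al orbT.
Qed.

Lemma size_gate_vars g : (size (gate_vars g) <= 16)%N.
Proof. by case: g => [i U|i j U]; rewrite /= size_allpairs size_enum_ord. Qed.

Lemma size_lvars l : (size (lvars l) <= 16 * size l)%N.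
Proof.
elim: l => [|g l IH] //=; rewrite /lvars /= size_cat mulnS.
by apply: leq_add => //; exact: size_gate_vars.
Qed.

Lemma size_ents ls : (size (ents ls) <= 16 * \sum_(l <- ls) size l)%N.
Proof.
elim: ls => [|l ls IH]; first by rewrite big_nil.
by rewrite /ents /= size_cat big_cons mulnDr leq_add // size_lvars.
Qed.

Lemma size_flat_support (l : layer R N) : (size l <= size (flatten (map (@gate_support R N) l)))%N.
Proof.
elim: l => [|g l IH] //=; rewrite size_cat.
by case: g => [i U|i j U] /=; rewrite ?add1n ?add2n ltnS // ltnW.
Qed.

Lemma layer_size (l : layer R N) : layer_ok l -> (size l <= N)%N.
Proof.
move=> [_ U]; apply: (leq_trans (size_flat_support l)).
by rewrite -(card_uniqP U) -[X in (_ <= X)%N](card_ord N) max_card.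
Qed.

Lemma depth_size (ls : seq (layer R N)) :
  (forall l, List.In l ls -> layer_ok l) -> (\sum_(l <- ls) size l <= size ls * N)%N.
Proof.
elim: ls => [|l ls IH] H; first by rewrite big_nil.
rewrite big_cons /= mulSn leq_add //; first by apply: layer_size; apply: H; left.
by apply: IH => l' Hl'; apply: H; right.
Qed.

End Mat.

Section Emb.
Variable R : realType.

Definition ext0 n m (y : basis n) : basis (n + m) :=
  [ffun k => if split k is inl i then y i else false].

Lemma embed_diag n m (F : op R n) (M : op R (n + m)) :
  embeds F M -> forall y, M (ext0 m y) (ext0 m y) = F y y.
Proof.
move=> He y.
pose psi : vec R n := fun u => (u == y)%:R.
have sl i : split (lshift m i) = inl _ i := unsplitK (inl _ i).
have sr j : split (rshift n j) = inr _ j := unsplitK (inr _ j).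
have restr : [ffun i => ext0 m y (lshift m i)] = y.
  by apply/ffunP => i; rewrite !ffunE sl.
have anc j : ext0 m y (rshift n j) = false by rewrite ffunE sr.
have wa u : with_ancillae psi u = (u == ext0 m y)%:R.
  rewrite /with_ancillae.
  case: (eqVneq u (ext0 m y)) => [->|ne].
    rewrite restr /psi eqxx mul1r; apply: big1 => j _; rewrite anc //.
  case: (eqVneq [ffun i => u (lshift m i)] y) => [ey|ney]; last by rewrite /psi (negbTE ney) mul0r.
  have [j uj] : exists j, u (rshift n j).
    apply: NNPP => H; move/eqP: ne; apply; apply/ffunP => k.
    rewrite -(splitK k); case: (split k) => [i|j] /=; rewrite ffunE ?sl ?sr.
      by rewrite -ey ffunE.
    by apply/negP => uj; apply: H; exists j.
  by rewrite (bigD1 j) //= uj /= mul0r mulr0.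
have := He psi (ext0 m y).
rewrite /opapp (eq_bigr (fun u => M (ext0 m y) u * (u == ext0 m y)%:R)); last by move=> u _; rewrite wa.
rewrite (bigD1 (ext0 m y)) //= eqxx mulr1 big1 ?addr0; last first.
  by move=> u /negbTE ->; rewrite mulr0.
move=> ->; rewrite /with_ancillae restr [X in _ * X]big1 ?mulr1; last by move=> j _; rewrite anc.
rewrite (bigD1 y) //= /psi eqxx mulr1 big1 ?addr0 //.
by move=> u /negbTE ->; rewrite mulr0.
Qed.

End Emb.


Lemma leq_expn_base a b e : (a <= b)%N -> (a ^ e <= b ^ e)%N.
Proof. by move=> ab; elim: e => [|e IH] //; rewrite !expnS leq_mul. Qed.

Lemma count_ineq N K c0 : (N < K)%N ->
  (((c0.+1 ^ N) * c0).+1 ^ N < (c0.+1 ^ N).+1 ^ K)%N.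
Proof.
move=> NK; set D := (c0.+1 ^ N)%N.
have h1 : ((D * c0).+1 <= D.+1 * c0.+1)%N by nia.
apply: (@leq_ltn_trans ((D.+1 * c0.+1) ^ N)); first exact: leq_expn_base.
rewrite expnMn -/D.
apply: (@leq_trans (D.+1 ^ N.+1)); last by apply: leq_pexp2l.
by rewrite expnSr ltn_mul2l ltnS leqnn expn_gt0.
Qed.

Theorem corollary1 (R : realType) :
  exists C : forall n : nat, seq (cd_gate R n),
    (forall n g, List.In g (C n) -> cd_gate_ok g) /\
    forall p : {poly R}, exists q : {poly R},
      forall n : nat, (0 < n)%N ->
        0 < q.[n%:R] /\
        forall (m d : nat) (M : op R (n + m)),
          m%:R <= p.[n%:R] ->
          has_depth_circuit d M ->
          embeds (cd_circuit_op (C n)) M ->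
          2 ^+ n / q.[n%:R] <= d%:R.
Proof.
pose W n' := proj1_sig (constructive_indefinite_description _ (indep_exists R #|{ffun 'I_n' -> bool}|)).
have HW n' : (forall i, `|W n' i| = 1) /\ indep (W n').
  exact: (proj2_sig (constructive_indefinite_description _ (indep_exists R #|{ffun 'I_n' -> bool}|))).
pose zf n' (S : {ffun 'I_n' -> bool}) : R[i] := (2 ^ n')%N.-root ((W n' (enum_rank S))^-1).
have zf1 n' S : `|zf n' S| = 1.
  by rewrite /zf norm_rootC normfV (HW n').1 invr1 rootC1 // expn_gt0.
have zfX n' S : zf n' S ^+ (2 ^ n') = (W n' (enum_rank S))^-1.
  by rewrite /zf rootCK // expn_gt0.
exists (fun n => match n return seq (cd_gate R n) with 0%N => [::] | n'.+1 => circ (zf n') end).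
split.
  move=> [|n'] g //=; exact: (@circ_ok R n' (zf n') (zf1 n') g).
move=> p.
exists (64%:R *: ('X + p * p + 1)).
move=> [|n'] // _.
have qE x : (64%:R *: ('X + p * p + 1)).[x] = 64%:R * (x + p.[x] * p.[x] + 1).
  by rewrite hornerZ !hornerE.
rewrite qE.
have n0 : 0 <= (n'.+1)%:R :> R by apply: ler0n.
have qpos : 0 < 64%:R * ((n'.+1)%:R + p.[(n'.+1)%:R] * p.[(n'.+1)%:R] + 1) :> R by nra.
split=> // m d M Hm Hd He.
have key : (2 ^ n' <= 32 * ((n'.+1 + m) * d))%N.
  rewrite leqNgt; apply/negP => Hlt.
  case: Hd => ls [sz [Hok HM]].
  set L := (n'.+1 + m)%N in Hlt *.
  set E0 := (\sum_(l <- ls) size l)%N.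
  have E0le : (E0 <= d * L)%N by rewrite -sz; exact: depth_size Hok.
  set es := ents ls.
  set vs := undup (es ++ map (fun a => a^*) es).
  have Nle : (size vs <= 32 * (L * d))%N.
    apply: leq_trans (size_undup _) _; rewrite size_cat size_map.
    have := size_ents ls; rewrite -/es -/E0 => h.
    rewrite mulnC in E0le.
    have h2 : (size es <= 16 * (L * d))%N by apply: leq_trans h _; rewrite leq_mul2l E0le orbT.
    move: h2; set Q := (L * d)%N => h2.
    by rewrite -[32%N]/(16 + 16)%N mulnDl leq_add.
  have Pc a : a \in vs -> a^* \in vs.
    rewrite !mem_undup !mem_cat => /orP[h|/mapP[b hb ->]].
      by apply/orP; right; apply/mapP; exists a.
    by rewrite conjCK hb.
  have Hent x y : inV (mem vs) E0 (M x y).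
    by rewrite HM; apply: circuit_inV => a ha; change (a \in vs); rewrite /vs mem_undup mem_cat ha.
  have Fd y : M (ext0 m y) (ext0 m y) = \prod_S fS (zf n') S y.
    by rewrite (embed_diag He) circ_semantics eqxx mul1r big_enum.
  pose X (T : {ffun 'I_n' -> bool}) := \prod_(y : basis n'.+1)
    (if chi T y then (M (ext0 m y) (ext0 m y))^* else M (ext0 m y) (ext0 m y)).
  have XW T : X T = W n' (enum_rank T).
    rewrite /X (eq_bigr (fun y => if chi T y then (\prod_S fS (zf n') S y)^* else \prod_S fS (zf n') S y)); last first.
      by move=> y _; rewrite Fd.
    by rewrite fourier ?zfX ?invrK.
  set K := #|{ffun 'I_n' -> bool}|.
  have cardK : K = (2 ^ n')%N by rewrite /K card_ffun card_bool card_ord.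
  set E1 := (#|basis n'.+1| * E0)%N.
  have HX T : inV (mem vs) E1 (X T).
    have := @inV_prod R (mem vs) _ (fun _ => E0) (fun y => if chi T y then (M (ext0 m y) (ext0 m y))^* else M (ext0 m y) (ext0 m y)).
    rewrite sum_nat_const; apply => y; case: (chi T y) => //.
    by apply: inV_conj.
  have HWi (i : 'I_K) : inV (mem vs) E1 (W n' i) by rewrite -(enum_valK i) -XW.
  set c0 := (K * E1)%N.
  set D := (c0.+1 ^ size vs)%N.
  have HY (al : {ffun 'I_K -> 'I_D.+1}) : inV (mem vs) (D * c0) (\prod_i W n' i ^+ al i).
    apply: (inV_le _ (inV_prod (fun i => inV_exp (al i) (HWi i)))).
    apply: (@leq_trans (\sum_(i < K) D * E1)).
      by apply: leq_sum => i _; rewrite leq_mul2r -ltnS ltn_ord orbT.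
    by rewrite sum_nat_const card_ord /c0 mulnCA.
  have cardA : (((D * c0).+1) ^ size vs < #|{ffun 'I_K -> 'I_D.+1}|)%N.
    rewrite card_ffun !card_ord; apply: count_ineq.
    by rewrite cardK; apply: leq_ltn_trans Nle Hlt.
  have [c [[al0 cal0] csum]] := inV_dep (undup_uniq _) HY cardA.
  by move/eqP: cal0; apply; exact: ((HW n').2 _ _ csum al0).
rewrite ler_pdivrMr //.
have kR : (2 ^ n'.+1)%:R <= 64%:R * (((n'.+1)%:R + m%:R) * d%:R) :> R.
  rewrite -natrD -natrM -natrM ler_nat expnS.
  by rewrite -[64%N]/(2 * 32)%N -mulnA leq_mul2l key orbT.
rewrite natrX in kR.
have d0 : 0 <= d%:R :> R by apply: ler0n.
have hm : m%:R <= p.[(n'.+1)%:R] * p.[(n'.+1)%:R] + 1 :> R by nra.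
nra.
Qed.
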